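(* Let $C>0$ and let $(p_N)_{N\in\mathbb{N}}$, $p_N(x)=\prod_{i=1}^N(x-z_i)$, be monic complex polynomials of degree $N$ with $\mu_{\rm norm}(p_N)\le C\sqrt{N}$ for all $N$. Then, as $N\to\infty$, $$\prod_{i=1}^N\|x-z_i\|\ge\frac{e^{C_{\log}+o(1)}}{2C}\sqrt{\frac{e^N}{N}}\,\Big\|\prod_{i=1}^N(x-z_i)\Big\|,$$ where $\|\cdot\|$ is the Bombieri–Weyl norm.
   Context: Bombieri–Weyl norm $\|\sum_{i=0}^N a_iz^i\|=(\sum_i\binom{N}{i}^{-1}|a_i|^2)^{1/2}$; $\mu_{\rm norm}(P,z)=N^{1/2}\|P\|(1+|z|^2)^{N/2-1}/|P'(z)|$ for a root $z$ of $P$ ($\infty$ at multiple roots), $\mu_{\rm norm}(P)=\max_{P(z)=0}\mu_{\rm norm}(P,z)$. $C_{\log}$ is the constant (known to exist) with $\min_{\mu_N\subset\mathbb{S}^2}\mathcal{E}_{\log}(\mu_N)=\kappa N^2-\tfrac12N\log N+C_{\log}N+o(N)$, where the minimum is over $N$-point subsets of the unit sphere $\mathbb{S}^2$, $\mathcal{E}_{\log}(\{x_1,\dots,x_N\})=-\sum_{i\ne j}\log\|x_i-x_j\|$ and $\kappa=\tfrac12-\log2$. *)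

(* Defs.v *)
From Stdlib Require Import Reals List.
Import ListNotations.
Open Scope R_scope.

Definition Cx := (R * R)%type.
Definition C0 : Cx := (0, 0).
Definition C1 : Cx := (1, 0).
Definition Cadd (a b : Cx) : Cx := (fst a + fst b, snd a + snd b).
Definition Cmul (a b : Cx) : Cx :=
  (fst a * fst b - snd a * snd b, fst a * snd b + snd a * fst b).
Definition Copp (a : Cx) : Cx := (- fst a, - snd a).
Definition Cnorm2 (a : Cx) : R := fst a * fst a + snd a * snd a.
Definition Cmod (a : Cx) : R := sqrt (Cnorm2 a).
Definition Cofnat (n : nat) : Cx := (INR n, 0).

(** Polynomials: coefficient lists, constant term first. *)
Fixpoint padd (p q : list Cx) : list Cx :=
  match p, q with
  | [], _ => q
  | _, [] => p
  | a :: p', b :: q' => Cadd a b :: padd p' q'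
  end.

Definition mul_lin (z : Cx) (p : list Cx) : list Cx :=
  padd (C0 :: p) (map (Cmul (Copp z)) p).

Definition poly_of_roots (l : list Cx) : list Cx :=
  fold_right mul_lin [C1] l.

Definition lin_poly (z : Cx) : list Cx := [Copp z; C1].

Definition peval (p : list Cx) (x : Cx) : Cx :=
  fold_right (fun a acc => Cadd a (Cmul x acc)) C0 p.

Fixpoint pderiv_aux (k : nat) (p : list Cx) : list Cx :=
  match p with
  | [] => []
  | a :: p' => Cmul (Cofnat k) a :: pderiv_aux (S k) p'
  end.
Definition pderiv (p : list Cx) : list Cx := pderiv_aux 1 (tl p).

(** degree of a coefficient list (the lists we use have nonzero leading coefficient) *)
Definition pdeg (p : list Cx) : nat := pred (length p).

(** Bombieri–Weyl norm: (sum_i C(N,i)^{-1} |a_i|^2)^{1/2}, N = degree *)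
Fixpoint bw_sum (N i : nat) (p : list Cx) : R :=
  match p with
  | [] => 0
  | a :: p' => Cnorm2 a / Binomial.C N i + bw_sum N (S i) p'
  end.
Definition bw_norm (p : list Cx) : R := sqrt (bw_sum (pdeg p) 0 p).

(** mu_norm(P,z) for a root z with P'(z) <> 0 *)
Definition mu_norm_at (P : list Cx) (z : Cx) : R :=
  sqrt (INR (pdeg P)) * bw_norm P
  * Rpower (1 + Cnorm2 z) (INR (pdeg P) / 2 - 1)
  / Cmod (peval (pderiv P) z).

(** mu_norm(P) <= b : every root is simple (mu = +infinity at multiple roots)
    and mu_norm(P,z) <= b for every root z. *)
Definition mu_norm_le (P : list Cx) (b : R) : Prop :=
  forall z : Cx, peval P z = C0 ->
    peval (pderiv P) z <> C0 /\ mu_norm_at P z <= b.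

Definition R3 := (R * R * R)%type.
Definition dist3 (x y : R3) : R :=
  let '(a, b, c) := x in let '(a', b', c') := y in
  sqrt ((a - a') ^ 2 + (b - b') ^ 2 + (c - c') ^ 2).
Definition on_sphere (x : R3) : Prop :=
  let '(a, b, c) := x in a ^ 2 + b ^ 2 + c ^ 2 = 1.
Definition R3_0 : R3 := (0, 0, 0).

Fixpoint sumR (n : nat) (f : nat -> R) : R :=
  match n with
  | O => 0
  | S m => sumR m f + f m
  end.

Definition log_energy (l : list R3) : R :=
  sumR (length l) (fun i => sumR (length l) (fun j =>
    if Nat.eqb i j then 0
    else - ln (dist3 (nth i l R3_0) (nth j l R3_0)))).

(** N-point subsets of S^2, listed without repetition *)
Definition sphere_config (N : nat) (l : list R3) : Prop :=
  length l = N /\ NoDup l /\ Forall on_sphere l.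

Definition kappa : R := 1 / 2 - ln 2.

Definition energy_main (c : R) (N : nat) : R :=
  kappa * INR N ^ 2 - 1 / 2 * INR N * ln (INR N) + c * INR N.

(** c = C_log :  min_{N-point subsets} E_log = kappa N^2 - 1/2 N log N + c N + o(N) *)
Definition is_Clog (c : R) : Prop :=
  forall eps : R, eps > 0 -> exists N0 : nat, forall N : nat, (N >= N0)%nat ->
    (exists l, sphere_config N l /\ log_energy l <= energy_main c N + eps * INR N)
    /\ (forall l, sphere_config N l -> log_energy l >= energy_main c N - eps * INR N).

Definition prodR (l : list R) : R := fold_right Rmult 1 l.

(* Main.v *)
Require Import Defs.
From Stdlib Require Import Reals List Lia Lra.
Import ListNotations.
Open Scope R_scope.

Ltac cx := repeat match goal with c : Cx |- _ => destruct c end;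
  unfold Cadd, Cmul, Copp, C0, C1, Cnorm2, Cofnat in *; simpl in *;
  try (f_equal; ring).
Ltac genp := repeat match goal with |- context [peval ?p ?x] =>
  let e := fresh "e" in set (e := peval p x) in *; clearbody e end.
Ltac cxg := genp; cx.

Lemma peval_cons a p x : peval (a :: p) x = Cadd a (Cmul x (peval p x)).
Proof. reflexivity. Qed.
Lemma peval_nil x : peval [] x = C0.
Proof. reflexivity. Qed.

Lemma peval_padd p q x : peval (padd p q) x = Cadd (peval p x) (peval q x).
Proof.
  revert q; induction p as [|a p IH]; intros [|b q]; simpl; try rewrite IH; cxg.
Qed.

Lemma peval_map c p x : peval (map (Cmul c) p) x = Cmul c (peval p x).
Proof.
  induction p as [|a p IH]; simpl. cx. rewrite IH. destruct (peval p x); cx.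
Qed.

Lemma peval_mul_lin z p x :
  peval (mul_lin z p) x = Cmul (Cadd x (Copp z)) (peval p x).
Proof.
  unfold mul_lin. rewrite peval_padd, peval_map. simpl.
  destruct (peval p x); cx.
Qed.

Lemma D_padd k p q x : peval (pderiv_aux k (padd p q)) x =
  Cadd (peval (pderiv_aux k p) x) (peval (pderiv_aux k q) x).
Proof.
  revert k q; induction p as [|a p IH]; intros k [|b q]; simpl; try rewrite IH; cxg.
Qed.

Lemma D_map k c p x : peval (pderiv_aux k (map (Cmul c) p)) x =
  Cmul c (peval (pderiv_aux k p) x).
Proof.
  revert k; induction p as [|a p IH]; intros k; simpl. cx.
  rewrite IH. destruct (peval (pderiv_aux (S k) p) x); cx.
Qed.

Lemma D_shift k q x : peval (pderiv_aux (S k) q) x =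
  Cadd (peval (pderiv_aux k q) x) (peval q x).
Proof.
  revert k; induction q as [|b q IH]; intros k; cbn [pderiv_aux]; rewrite ?peval_cons, ?peval_nil. cx.
  rewrite IH. unfold Cofnat. rewrite S_INR. cxg.
Qed.

Lemma deriv_mul_lin z p x :
  peval (pderiv (mul_lin z p)) x =
  Cadd (peval p x) (Cmul (Cadd x (Copp z)) (peval (pderiv p) x)).
Proof.
  destruct p as [|a p].
  - unfold mul_lin, pderiv; simpl. cx.
  - unfold pderiv at 1.
    replace (tl (mul_lin z (a :: p))) with (padd (a::p) (map (Cmul (Copp z)) p)) by reflexivity.
    rewrite D_padd, D_map. cbn [pderiv_aux]. rewrite peval_cons, D_shift, peval_cons.
    unfold Cofnat; simpl INR. change (pderiv (a :: p)) with (pderiv_aux 1 p). cxg.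
Qed.

Fixpoint prodN (n : nat) (g : nat -> R) : R :=
  match n with O => 1 | S m => g O * prodN m (fun k => g (S k)) end.

Lemma prodN_ext n f g : (forall k, (k < n)%nat -> f k = g k) -> prodN n f = prodN n g.
Proof.
  revert f g; induction n; intros f g H; simpl. reflexivity.
  rewrite (H 0%nat) by lia. f_equal. apply IHn. intros; apply H; lia.
Qed.

Lemma prodN_zero n g k : (k < n)%nat -> g k = 0 -> prodN n g = 0.
Proof.
  revert g k; induction n; intros g k Hk H; simpl. lia.
  destruct k. rewrite H; ring.
  rewrite (IHn (fun k => g (S k)) k) by (auto; lia). ring.
Qed.

Lemma Cnorm2_mul a b : Cnorm2 (Cmul a b) = Cnorm2 a * Cnorm2 b.
Proof. cx. ring. Qed.

Lemma Cnorm2_nonneg a : 0 <= Cnorm2 a.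
Proof. cx. nra. Qed.

Lemma Cnorm2_eq0 a : Cnorm2 a = 0 -> a = C0.
Proof. cx. intros H. f_equal; nra. Qed.

Lemma mul_lin_len z p : length (mul_lin z p) = S (length p).
Proof.
  unfold mul_lin. assert (H : forall p q, length (padd p q) = Nat.max (length p) (length q)).
  { induction p0; intros [|b q]; simpl; auto. }
  rewrite H; cbn [length]; rewrite length_map. lia.
Qed.

Lemma por_len l : length (poly_of_roots l) = S (length l).
Proof. induction l; simpl. reflexivity. fold (poly_of_roots l). rewrite mul_lin_len; auto. Qed.

Lemma por_cons z l : poly_of_roots (z :: l) = mul_lin z (poly_of_roots l).
Proof. reflexivity. Qed.

Lemma eval_por l x d : Cnorm2 (peval (poly_of_roots l) x) =
  prodN (length l) (fun k => Cnorm2 (Cadd x (Copp (nth k l d)))).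
Proof.
  induction l as [|z l IH]; simpl length.
  - simpl. cx.
  - rewrite por_cons, peval_mul_lin, Cnorm2_mul, IH. reflexivity.
Qed.

Lemma deriv_por l d i : (i < length l)%nat ->
  Cnorm2 (peval (pderiv (poly_of_roots l)) (nth i l d)) =
  prodN (length l) (fun k => if Nat.eqb k i then 1 else Cnorm2 (Cadd (nth i l d) (Copp (nth k l d)))).
Proof.
  revert i; induction l as [|z l IH]; intros i Hi; simpl length in *. lia.
  rewrite por_cons, deriv_mul_lin. destruct i as [|i].
  - simpl nth. replace (Cmul (Cadd z (Copp z)) (peval (pderiv (poly_of_roots l)) z)) with C0 by (genp; cx).
    replace (Cadd (peval (poly_of_roots l) z) C0) with (peval (poly_of_roots l) z) by (genp; cx).
    rewrite (eval_por l z d). simpl prodN. rewrite Rmult_1_l. reflexivity.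
  - simpl nth. assert (H0 : peval (poly_of_roots l) (nth i l d) = C0).
    { apply Cnorm2_eq0. rewrite (eval_por l _ d). apply (prodN_zero _ _ i). lia. cx; ring. }
    rewrite H0. replace (Cadd C0 _) with (Cmul (Cadd (nth i l d) (Copp z)) (peval (pderiv (poly_of_roots l)) (nth i l d))) by (genp; cx).
    rewrite Cnorm2_mul, IH by lia. simpl prodN. reflexivity.
Qed.

Lemma sumR_ext n f g : (forall k, (k < n)%nat -> f k = g k) -> sumR n f = sumR n g.
Proof.
  induction n; intros H; simpl. reflexivity.
  rewrite IHn. rewrite H. reflexivity. lia. intros; apply H; lia.
Qed.

Lemma sumR_le n f g : (forall k, (k < n)%nat -> f k <= g k) -> sumR n f <= sumR n g.
Proof.
  induction n; intros H; simpl. lra.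
  assert (f n <= g n) by (apply H; lia).
  assert (sumR n f <= sumR n g) by (apply IHn; intros; apply H; lia). lra.
Qed.

Lemma sumR_const n c : sumR n (fun _ => c) = INR n * c.
Proof. induction n; simpl sumR. simpl; ring. rewrite IHn, S_INR; ring. Qed.

Lemma sumR_shift n f : sumR (S n) f = f O + sumR n (fun i => f (S i)).
Proof.
  induction n. simpl; ring.
  change (sumR (S (S n)) f) with (sumR (S n) f + f (S n)). rewrite IHn. simpl. ring.
Qed.

Lemma sumR_skip n i f : sumR n (fun j => if Nat.eqb i j then 0 else f j) =
  sumR n f - (if Nat.ltb i n then f i else 0).
Proof.
  induction n; simpl sumR. destruct (Nat.ltb_spec i 0); [lia|ring].
  rewrite IHn.
  destruct (Nat.eqb_spec i n), (Nat.ltb_spec i n), (Nat.ltb_spec i (S n)); subst; try lia; ring.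
Qed.

Lemma sumR_scal n c f : sumR n (fun i => c * f i) = c * sumR n f.
Proof. induction n; simpl. ring. rewrite IHn. ring. Qed.

Lemma sumR_lin n (g h : nat -> R) al be :
  sumR n (fun j => al + (-/2 * g j + (be + /2 * h j))) =
  INR n * al - /2 * sumR n g + INR n * be + /2 * sumR n h.
Proof. induction n; simpl sumR. simpl; ring. rewrite IHn, S_INR; ring. Qed.

Lemma ln_prodN n g : (forall k, (k < n)%nat -> 0 < g k) ->
  0 < prodN n g /\ ln (prodN n g) = sumR n (fun k => ln (g k)).
Proof.
  revert g; induction n; intros g H; simpl prodN.
  - split. lra. simpl. apply ln_1.
  - destruct (IHn (fun k => g (S k))) as [H1 H2]. intros; apply H; lia.
    assert (0 < g O) by (apply H; lia).
    split. apply Rmult_lt_0_compat; auto.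
    rewrite ln_mult, H2, sumR_shift; auto.
Qed.

Lemma prodR_exp (g : Cx -> R) l d : (forall z, 0 < g z) ->
  prodR (map g l) = exp (sumR (length l) (fun i => ln (g (nth i l d)))).
Proof.
  intros H; induction l as [|z l IH]. simpl. rewrite exp_0; reflexivity.
  simpl length. rewrite sumR_shift. rewrite exp_plus, exp_ln by auto.
  change (prodR (map g (z :: l))) with (g z * prodR (map g l)). rewrite IH. reflexivity.
Qed.

Lemma prodR_nonneg (g : Cx -> R) l : (forall z, 0 <= g z) -> 0 <= prodR (map g l).
Proof.
  intros H; induction l; simpl. lra. apply Rmult_le_pos; auto.
Qed.

Lemma ln_sqrt' x : 0 < x -> ln (sqrt x) = ln x / 2.
Proof.
  intros Hx. assert (Hs : 0 < sqrt x) by (apply sqrt_lt_R0; auto).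
  assert (E : ln x = ln (sqrt x * sqrt x)) by (rewrite sqrt_sqrt; lra).
  rewrite E, ln_mult by auto. lra.
Qed.

Lemma exp_le' x y : x <= y -> exp x <= exp y.
Proof. intros [H|H]. left; apply exp_increasing; auto. subst; lra. Qed.

Lemma ln_le' x y : 0 < x -> x <= y -> ln x <= ln y.
Proof. intros Hx [H|H]. left; apply ln_increasing; auto. subst; lra. Qed.

Definition stereo (z : Cx) : R3 :=
  ((2 * fst z / (1 + Cnorm2 z), 2 * snd z / (1 + Cnorm2 z)), (Cnorm2 z - 1) / (1 + Cnorm2 z)).

Lemma stereo_dist z w : dist3 (stereo z) (stereo w) =
  sqrt (4 * Cnorm2 (Cadd z (Copp w)) / ((1 + Cnorm2 z) * (1 + Cnorm2 w))).
Proof.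
  destruct z as [u v], w as [u' v']. unfold dist3, stereo, Cnorm2, Cadd, Copp; simpl.
  f_equal. field. split; nra.
Qed.

Lemma stereo_sphere z : on_sphere (stereo z).
Proof.
  destruct z as [u v]. unfold on_sphere, stereo, Cnorm2; simpl. field. nra.
Qed.

Lemma dist3_refl x : dist3 x x = 0.
Proof.
  destruct x as [[a b] c]. unfold dist3. replace ((a - a) ^ 2 + (b - b) ^ 2 + (c - c) ^ 2) with 0 by ring.
  apply sqrt_0.
Qed.

Lemma bw_lin z : bw_norm (lin_poly z) = sqrt (1 + Cnorm2 z).
Proof.
  unfold bw_norm, lin_poly, pdeg; simpl length; simpl pred. simpl bw_sum.
  unfold Binomial.C; simpl. f_equal. cx. field.
Qed.

Lemma ln_dist_formula c a1 a2 : 0 < c -> 0 < a1 -> 0 < a2 ->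
  - ln (sqrt (4 * c / (a1 * a2))) = - ln 2 + (-/2 * ln c + (/2 * ln a1 + /2 * ln a2)).
Proof.
  intros Hc H1 H2.
  assert (Hp : 0 < 4 * c / (a1 * a2)) by (apply Rdiv_lt_0_compat; nra).
  rewrite ln_sqrt' by auto. unfold Rdiv.
  rewrite ln_mult by (try apply Rinv_0_lt_compat; nra).
  rewrite ln_Rinv by nra. rewrite (ln_mult a1 a2), (ln_mult 4 c) by lra.
  replace 4 with (2 * 2) by ring. rewrite ln_mult by lra. field.
Qed.

Lemma sqrt_exp_div n : 0 < n -> sqrt (exp n / n) = exp ((n - ln n) / 2).
Proof.
  intros Hn. rewrite <- (sqrt_square (exp ((n - ln n) / 2))) by (left; apply exp_pos).
  f_equal. rewrite <- exp_plus. replace ((n - ln n) / 2 + (n - ln n) / 2) with (n + - ln n) by field.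
  rewrite exp_plus, exp_Ropp, exp_ln by auto. reflexivity.
Qed.

Definition zz (l : list Cx) i := nth i l C0.
Definition aa (l : list Cx) i := 1 + Cnorm2 (zz l i).
Definition cc (l : list Cx) i k := Cnorm2 (Cadd (zz l i) (Copp (zz l k))).

Theorem theorem4p5 (Clog : R) (HClog : is_Clog Clog)
  (C : R) (HC : C > 0) (zs : nat -> list Cx)
  (Hlen : forall N : nat, length (zs N) = N)
  (Hmu : forall N : nat, mu_norm_le (poly_of_roots (zs N)) (C * sqrt (INR N))) :
  forall eps : R, eps > 0 -> exists N0 : nat, forall N : nat, (N >= N0)%nat ->
    prodR (map (fun z => bw_norm (lin_poly z)) (zs N))
    >= exp (Clog - eps) / (2 * C) * sqrt (exp (INR N) / INR N)
       * bw_norm (poly_of_roots (zs N)).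
Proof.
  intros eps Heps.
  destruct (HClog eps Heps) as [N1 HN1].
  exists (Nat.max N1 1). intros N HN.
  destruct (HN1 N ltac:(lia)) as [_ Hlow].
  assert (HNr : 0 < INR N) by (apply lt_0_INR; lia).
  specialize (Hmu N). pose proof (Hlen N) as Hl.
  set (l := zs N) in *. set (P := poly_of_roots l) in *.
  assert (Hdeg : pdeg P = N) by (unfold pdeg, P; rewrite por_len; simpl; auto).
  assert (HB0 : 0 <= bw_norm P) by (unfold bw_norm; apply sqrt_pos).
  destruct (Req_dec (bw_norm P) 0) as [HB|HB].
  { rewrite HB, Rmult_0_r. apply Rle_ge. apply prodR_nonneg. intros; rewrite bw_lin; apply sqrt_pos. }
  set (B := bw_norm P) in *. assert (HBp : 0 < B) by lra.
  assert (Ha : forall i, 0 < aa l i) by (intros; unfold aa; pose proof (Cnorm2_nonneg (zz l i)); lra).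
  assert (Hroot : forall i, (i < N)%nat -> peval P (zz l i) = C0).
  { intros i Hi. apply Cnorm2_eq0. unfold P, zz. rewrite (eval_por l _ C0). apply (prodN_zero _ _ i). lia.
    destruct (nth i l C0); cx; ring. }
  assert (HQ : forall i, (i < N)%nat -> 0 < Cnorm2 (peval (pderiv P) (zz l i)) /\
                  mu_norm_at P (zz l i) <= C * sqrt (INR N)).
  { intros i Hi. destruct (Hmu (zz l i) (Hroot i Hi)) as [H1 H2]. split; auto.
    pose proof (Cnorm2_nonneg (peval (pderiv P) (zz l i))).
    destruct (Req_dec (Cnorm2 (peval (pderiv P) (zz l i))) 0) as [E|E]; [|lra].
    exfalso; apply H1, Cnorm2_eq0, E. }
  assert (Hprod : forall i, (i < N)%nat -> Cnorm2 (peval (pderiv P) (zz l i)) =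
            prodN N (fun k => if Nat.eqb k i then 1 else cc l i k)).
  { intros i Hi. unfold P, zz, cc. rewrite deriv_por by lia. rewrite Hl. reflexivity. }
  assert (Hdist : forall i j, (i < N)%nat -> (j < N)%nat -> i <> j -> 0 < cc l i j).
  { intros i j Hi Hj Hij. pose proof (Cnorm2_nonneg (Cadd (zz l i) (Copp (zz l j)))).
    fold (cc l i j) in H.
    destruct (Req_dec (cc l i j) 0) as [E|E]; [|lra]. exfalso.
    destruct (HQ i Hi) as [H1 _]. rewrite Hprod in H1 by auto.
    rewrite (prodN_zero N _ j) in H1. lra. auto.
    destruct (Nat.eqb_spec j i); [lia|auto]. }
  assert (HlnQ : forall i, (i < N)%nat -> ln (Cnorm2 (peval (pderiv P) (zz l i))) =
            sumR N (fun k => ln (if Nat.eqb k i then 1 else cc l i k))).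
  { intros i Hi. rewrite Hprod by auto. apply ln_prodN. intros k Hk.
    destruct (Nat.eqb_spec k i); [lra|apply Hdist; auto]. }
  assert (Hmub : forall i, (i < N)%nat -> ln B + (INR N / 2 - 1) * ln (aa l i) <=
            ln C + ln (Cnorm2 (peval (pderiv P) (zz l i))) / 2).
  { intros i Hi. destruct (HQ i Hi) as [H1 H2].
    unfold mu_norm_at in H2. rewrite Hdeg in H2. fold B in H2.
    unfold Cmod in H2. set (Q := Cnorm2 (peval (pderiv P) (zz l i))) in *.
    set (R0 := Rpower (1 + Cnorm2 (zz l i)) (INR N / 2 - 1)) in *.
    assert (HR0 : 0 < R0) by (unfold R0, Rpower; apply exp_pos).
    assert (Hs : 0 < sqrt (INR N)) by (apply sqrt_lt_R0; auto).
    assert (HD : 0 < sqrt Q) by (apply sqrt_lt_R0; auto).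
    assert (H3 : sqrt (INR N) * (B * R0) <= sqrt (INR N) * (C * sqrt Q)).
    { replace (sqrt (INR N) * (B * R0)) with ((sqrt (INR N) * B * R0 / sqrt Q) * sqrt Q) by (field; lra).
      replace (sqrt (INR N) * (C * sqrt Q)) with ((C * sqrt (INR N)) * sqrt Q) by ring.
      apply Rmult_le_compat_r; lra. }
    apply Rmult_le_reg_l in H3; auto.
    apply ln_le' in H3; [|nra].
    rewrite !ln_mult in H3 by nra. rewrite ln_sqrt' in H3 by auto.
    unfold R0, Rpower in H3. rewrite ln_exp in H3. unfold aa. lra. }
  set (sl := map stereo l).
  assert (Hnth : forall i, (i < N)%nat -> nth i sl R3_0 = stereo (zz l i)).
  { intros i Hi. unfold sl, zz. rewrite nth_indep with (d' := stereo C0) by (rewrite length_map; lia).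
    apply map_nth. }
  assert (Hconf : sphere_config N sl).
  { split; [unfold sl; rewrite length_map; auto|split].
    - apply (NoDup_nth sl R3_0). intros i j Hi Hj E. unfold sl in Hi, Hj; rewrite length_map, Hl in Hi, Hj.
      rewrite !Hnth in E by auto. destruct (Nat.eq_dec i j) as [|Hij]; auto. exfalso.
      assert (E2 : dist3 (stereo (zz l i)) (stereo (zz l j)) = 0) by (rewrite E; apply dist3_refl).
      rewrite stereo_dist in E2. fold (cc l i j) in E2.
      assert (0 < 4 * cc l i j / ((1 + Cnorm2 (zz l i)) * (1 + Cnorm2 (zz l j)))).
      { pose proof (Hdist i j Hi Hj Hij). pose proof (Ha i). pose proof (Ha j). unfold aa in *.
        apply Rdiv_lt_0_compat; nra. }
      apply sqrt_lt_R0 in H. lra.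
    - apply Forall_forall. intros x Hx. unfold sl in Hx. apply in_map_iff in Hx.
      destruct Hx as [w [<- _]]. apply stereo_sphere. }
  specialize (Hlow sl Hconf).
  set (S := sumR N (fun j => ln (aa l j))).
  set (K := -(INR N - 1) * ln 2 + ln C - ln B + S / 2).
  assert (Hup : log_energy sl <= INR N * K).
  { unfold log_energy. replace (length sl) with N by (unfold sl; rewrite length_map; auto).
    rewrite <- sumR_const. apply sumR_le. intros i Hi.
    rewrite (sumR_ext N _ (fun j => if Nat.eqb i j then 0 else
       (- ln 2 + (-/2 * ln (cc l i j) + (/2 * ln (aa l i) + /2 * ln (aa l j)))))).
    2:{ intros j Hj. destruct (Nat.eqb_spec i j); auto.
        rewrite !Hnth by auto. rewrite stereo_dist. fold (cc l i j).
        apply ln_dist_formula; auto. }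
    rewrite sumR_skip. destruct (Nat.ltb_spec i N); [|lia].
    rewrite (sumR_lin N (fun j => ln (cc l i j)) (fun j => ln (aa l j)) (- ln 2) (/2 * ln (aa l i))).
    pose proof (HlnQ i Hi) as HQi.
    rewrite (sumR_ext N _ (fun k => if Nat.eqb i k then 0 else ln (cc l i k))) in HQi.
    2:{ intros k Hk. rewrite Nat.eqb_sym. destruct (Nat.eqb i k); auto. apply ln_1. }
    rewrite sumR_skip in HQi. destruct (Nat.ltb_spec i N); [|lia].
    pose proof (Hmub i Hi). unfold K, S. nra. }
  assert (Hfin : Clog - eps + INR N / 2 - INR N * ln 2 - / 2 * ln (INR N) <= K).
  { unfold energy_main, kappa in Hlow.
    apply (Rmult_le_reg_l (INR N)); auto. nra. }
  rewrite (prodR_exp _ _ C0) by (intros; rewrite bw_lin; apply sqrt_lt_R0; pose proof (Cnorm2_nonneg z); lra).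
  rewrite Hl.
  rewrite (sumR_ext N _ (fun i => /2 * ln (aa l i))).
  2:{ intros i Hi. rewrite bw_lin, ln_sqrt' by apply Ha. unfold aa, zz. field. }
  rewrite sqrt_exp_div by auto.
  replace (exp (Clog - eps) / (2 * C) * exp ((INR N - ln (INR N)) / 2) * B) with
    (exp (Clog - eps - ln (2 * C) + (INR N - ln (INR N)) / 2 + ln B)).
  2:{ replace (Clog - eps - ln (2 * C)) with ((Clog - eps) + - ln (2 * C)) by ring. rewrite !exp_plus, exp_Ropp, !exp_ln by lra.
      field. lra. }
  apply Rle_ge, exp_le'.
  assert (E : sumR N (fun i => / 2 * ln (aa l i)) = /2 * S).
  { unfold S. apply sumR_scal. }
  rewrite E. rewrite ln_mult by lra. unfold K in Hfin. lra.
Qed.
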